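(* Let $(X,w)$ be a weighted system in a real Euclidean affine space $\mathbb{A}$ with $\mu_0=0$. The following are equivalent: (i) $\mu_1(p)=\overrightarrow{O}$ for all $p\in\mathbb{A}$; (ii) $\mu_2$ is constant on $\mathbb{A}$; (iii) the restriction of $\mu_2$ to $X$ is constant.
   Context: A weighted system is a finite set $X\subset\mathbb{A}$ with $w:X\to\mathbb{R}$. $\mu_0=\sum_xw(x)$, $\mu_1(p)=\sum_xw(x)\overrightarrow{px}$, $\mu_2(p)=\sum_xw(x)\overrightarrow{px}^2$, where the square of a vector is its inner product with itself. *)

(* Defs.v *)
(* The real Euclidean affine space of dimension n is modelled
   as 'rV[R]_n (R : realType) with the standard inner product; the vector
   from p to x is x - p. *)
From mathcomp Require Import all_boot all_order all_algebra.
From mathcomp Require Import reals.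
Set Implicit Arguments. Unset Strict Implicit. Unset Printing Implicit Defensive.
Import Order.TTheory GRing.Theory Num.Theory.
Local Open Scope ring_scope.

Definition dotv (R : realType) (n : nat) (u v : 'rV[R]_n) : R :=
  \sum_(i < n) u 0 i * v 0 i.

(* moments of the weighted system (X, w); X is a duplicate-free list of points *)
Definition mu0 (R : realType) (n : nat) (X : seq 'rV[R]_n) (w : 'rV[R]_n -> R) : R :=
  \sum_(x <- X) w x.

Definition mu1 (R : realType) (n : nat) (X : seq 'rV[R]_n) (w : 'rV[R]_n -> R)
  (p : 'rV[R]_n) : 'rV[R]_n :=
  \sum_(x <- X) w x *: (x - p).

Definition mu2 (R : realType) (n : nat) (X : seq 'rV[R]_n) (w : 'rV[R]_n -> R)
  (p : 'rV[R]_n) : R :=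
  \sum_(x <- X) w x * dotv (x - p) (x - p).

(* Main.v *)
Require Import Defs.
From mathcomp Require Import all_boot all_order all_algebra.
From mathcomp Require Import reals.
From mathcomp Require Import ring lra.
Import Order.TTheory GRing.Theory Num.Theory.
Local Open Scope ring_scope.

Section H.
Variables (R : realType) (n : nat) (X : seq 'rV[R]_n) (w : 'rV[R]_n -> R).

Lemma dotv_mu1 v : dotv (mu1 X w 0) v = \sum_(x <- X) w x * dotv x v.
Proof.
rewrite /dotv /mu1; apply: esym.
under eq_bigr do rewrite mulr_sumr.
rewrite exchange_big /=; apply: eq_bigr => i _.
rewrite summxE mulr_suml; apply: eq_bigr => x _.
by rewrite !mxE subr0 mulrA.
Qed.

Lemma mu1E p : mu1 X w p = mu1 X w 0 - mu0 X w *: p.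
Proof.
rewrite /mu1 /mu0 scaler_suml -sumrB; apply: eq_bigr => x _.
by rewrite subr0 scalerBr.
Qed.

Lemma mu2E p : mu2 X w p = mu2 X w 0 - 2 * dotv (mu1 X w 0) p + mu0 X w * dotv p p.
Proof.
rewrite dotv_mu1 /mu2 /mu0 mulr_suml mulr_sumr -sumrB -big_split /=.
apply: eq_bigr => x _; rewrite /dotv !mulr_sumr -!sumrB -big_split /=.
apply: eq_bigr => i _; rewrite !mxE subr0; ring.
Qed.

Lemma dotvC (u v : 'rV[R]_n) : dotv u v = dotv v u.
Proof. by apply: eq_bigr => i _; rewrite mulrC. Qed.

Lemma dotv_eq0 (u : 'rV[R]_n) : dotv u u = 0 -> u = 0.
Proof.
move=> /eqP; rewrite /dotv psumr_eq0; last by move=> i _; rewrite -expr2 sqr_ge0.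
move=> /allP H; apply/rowP => i; rewrite mxE.
have := H i (mem_index_enum i); rewrite /= mulf_eq0 orbb => /eqP //.
Qed.
End H.

Theorem corollary2p5 (R : realType) (n : nat) (X : seq 'rV[R]_n)
  (w : 'rV[R]_n -> R) (hX : uniq X) (h0 : mu0 X w = 0) :
  [<-> (forall p : 'rV[R]_n, mu1 X w p = 0);
       (forall p q : 'rV[R]_n, mu2 X w p = mu2 X w q);
       (forall x y : 'rV[R]_n, x \in X -> y \in X -> mu2 X w x = mu2 X w y)].
Proof.
tfae.
- move=> h1 p q; rewrite (mu2E _ _ X w p) (mu2E _ _ X w q) h1 h0 /dotv !mul0r !addr0.
  by rewrite !big1 // => i _; rewrite mxE mul0r.
- by move=> h2 x y _ _; apply: h2.
- move=> h3 p; rewrite (mu1E _ _ X w p) h0 scale0r subr0.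
  case: X hX h0 h3 => [|x0 s] _ h0' h3; first by rewrite /mu1 big_nil.
  have Hx : forall x, x \in x0 :: s -> dotv (mu1 (x0 :: s) w 0) x = dotv (mu1 (x0 :: s) w 0) x0.
    move=> x xin; have := h3 x x0 xin (mem_head _ _).
    rewrite (mu2E _ _ _ w x) (mu2E _ _ _ w x0) h0' !mul0r !addr0; lra.
  apply: dotv_eq0; rewrite {1}dotv_mu1.
  rewrite (eq_big_seq (fun x => w x * dotv (mu1 (x0 :: s) w 0) x0)).
    by rewrite -mulr_suml -/(mu0 _ _) h0' mul0r.
  by move=> x xin; rewrite dotvC Hx.
Qed.
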